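(* Let $K\subset\mathbb R^2$ be a compact connected set with $\mathcal H^1(K)<+\infty$. Assume that for some $x\in K$ and $r\in(0,\mathrm{diam}(K))$ we have $\beta_K(x,r)\leq1/2$. Then $$\mathcal H^1(K\cap B(x,r))\geq 2r-3r\beta_K(x,r).$$
   Context: $\beta_K(x,r)=\frac1r\inf_L\max\{\sup_{y\in K\cap\overline B(x,r)}\mathrm{dist}(y,L),\sup_{y\in L\cap\overline B(x,r)}\mathrm{dist}(y,K)\}$, the infimum being over lines $L$ passing through $x$. *)

(* Defs.v *)
(* The plane R^2 is modelled as R * R (product
   topology = Euclidean topology), with the Euclidean distance given below. *)
From HB Require Import structures.
From mathcomp Require Import all_boot all_order all_algebra.
From mathcomp Require Import all_classical all_reals all_analysis.
Set Implicit Arguments. Unset Strict Implicit. Unset Printing Implicit Defensive.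
Import Order.TTheory GRing.Theory Num.Theory.
Import numFieldNormedType.Exports.
Local Open Scope classical_set_scope.
Local Open Scope ring_scope.

Section Plane.
Variable R : realType.
Definition pt := (R * R)%type.

Definition edist (p q : pt) : R :=
  Num.sqrt ((p.1 - q.1) ^+ 2 + (p.2 - q.2) ^+ 2).

Definition eball (x : pt) (r : R) : set pt := [set y | edist x y < r].
Definition ecball (x : pt) (r : R) : set pt := [set y | edist x y <= r].

(* diameter (in \bar R; the diameter of the empty set is 0) *)
Definition ediam (A : set pt) : \bar R :=
  ereal_sup ([set (edist p q)%:E | p in A & q in A] `|` [set 0%E]).

Definition edist_set (y : pt) (S : set pt) : \bar R :=
  ereal_inf [set (edist y z)%:E | z in S].

Definition H1_delta (delta : R) (A : set pt) : \bar R :=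
  ereal_inf [set (\sum_(i <oo) ediam (E i))%E | E in
    [set E : nat -> set pt | A `<=` \bigcup_i E i /\
                             forall i, (ediam (E i) <= delta%:E)%E]].

(* 1-dimensional Hausdorff measure H^1 (normalized so that H^1 = length) *)
Definition H1 (A : set pt) : \bar R :=
  ereal_sup [set H1_delta delta A | delta in [set d : R | 0 < d]].

Definition line_through (x v : pt) : set pt :=
  [set y | exists t : R, y = (x.1 + t * v.1, x.2 + t * v.2)].

Definition lines_through (x : pt) : set (set pt) :=
  [set line_through x v | v in [set v : pt | v != (0, 0)]].

Definition beta (K : set pt) (x : pt) (r : R) : \bar R :=
  ((r^-1)%:E * ereal_inf [set
     maxe (ereal_sup [set edist_set y L | y in K `&` ecball x r])
          (ereal_sup [set edist_set y K | y in L `&` ecball x r])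
   | L in lines_through x])%E.
End Plane.

(* Main.v *)
Require Import Defs.
From HB Require Import structures.
From mathcomp Require Import all_boot all_order all_algebra.
From mathcomp Require Import all_classical all_reals all_analysis.
From mathcomp Require Import ring lra.
Import Order.TTheory GRing.Theory Num.Theory.
Import numFieldNormedType.Exports.
Local Open Scope classical_set_scope.
Local Open Scope ring_scope.

Section Geo.
Variable R : realType.
Implicit Types (x u y z : pt R) (A : set (pt R)) (s t g : R).
Local Notation edist := (@Defs.edist R).

Definition prj x u y : R := (y.1 - x.1) * u.1 + (y.2 - x.2) * u.2.
Definition nrm x u y : R := (y.2 - x.2) * u.1 - (y.1 - x.1) * u.2.

Lemma edist_ge0 p q : 0 <= edist p q.
Proof. exact: sqrtr_ge0. Qed.

Lemma edist_sq p q : edist p q ^+ 2 = (p.1 - q.1) ^+ 2 + (p.2 - q.2) ^+ 2.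
Proof. by rewrite sqr_sqrtr // addr_ge0 // sqr_ge0. Qed.

Lemma prj_lip x u y y' : u.1 ^+ 2 + u.2 ^+ 2 = 1 ->
  prj x u y - prj x u y' <= edist y y'.
Proof.
move=> hu; have h0 := edist_ge0 y y'; have h2 := edist_sq y y'.
rewrite /prj.
set t := _ - _.
have ht : t = (y.1 - y'.1) * u.1 + (y.2 - y'.2) * u.2 by rewrite /t; ring.
have hcs : t ^+ 2 <= edist y y' ^+ 2.
  rewrite h2 ht.
  have : 0 <= ((y.1 - y'.1) * u.2 - (y.2 - y'.2) * u.1) ^+ 2 by apply: sqr_ge0.
  set a := y.1 - y'.1; set c := y.2 - y'.2.
  have -> : a ^+ 2 + c ^+ 2 = (a ^+ 2 + c ^+ 2) * (u.1 ^+ 2 + u.2 ^+ 2) by rewrite hu mulr1.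
  move=> h; nra.
nra.
Qed.

Lemma ediam_ge0 A : (0 <= ediam A)%E.
Proof. by apply: ereal_sup_ubound; right. Qed.

Lemma edist_le_ediam A p q : A p -> A q -> ((edist p q)%:E <= ediam A)%E.
Proof. by move=> hp hq; apply: ereal_sup_ubound; left; exists p => //; exists q. Qed.

Lemma leb_itv (a b : R) : a <= b ->
  lebesgue_measure (`[a, b]%classic : set R) = (b - a)%:E.
Proof.
move=> ab; rewrite lebesgue_measure_itv /=.
case: ifPn => [_|]; first by rewrite EFinB.
rewrite lte_fin -leNgt => ba. have -> : b = a by apply/eqP; rewrite eq_le ab ba.
by rewrite subrr.
Qed.

Lemma proj_H1 x u (A : set (pt R)) (a1 a2 j1 j2 : R) :
  u.1 ^+ 2 + u.2 ^+ 2 = 1 -> a1 <= a2 -> j1 <= j2 ->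
  (forall t, a1 <= t <= a2 -> (j1 <= t <= j2) \/ exists2 y, A y & prj x u y = t) ->
  (((a2 - a1) - (j2 - j1))%:E <= H1 A)%E.
Proof.
move=> hu ha hj hcov.
apply: (@le_trans _ _ (H1_delta 1 A)); last first.
  by rewrite /H1; apply: ereal_sup_ubound; exists 1 => //=; rewrite ltr01.
apply: le_ereal_inf_tmp => _ [E [cov _] <-].
case: (pselect (exists i, ediam (E i) = +oo%E)) => [[k Hk]|Hfin].
  rewrite (nneseries_pinfty _ _ Hk) ?leey // => n _; exact: ediam_ge0.
have fin i : ediam (E i) = (fine (ediam (E i)))%:E.
  rewrite fineK // ge0_fin_numE ?ediam_ge0 // ltNge leye_eq; apply/negP => /eqP h.
  by apply: Hfin; exists i.
pose d i := fine (ediam (E i)).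
pose m i := inf [set prj x u y | y in E i].
pose H i := (`[m i, m i + d i]%classic : set R).
have d0 i : 0 <= d i by rewrite -lee_fin -fin ediam_ge0.
have memH k y : E k y -> H k (prj x u y).
  move=> hy.
  have lb : lbound [set prj x u y | y in E k] (prj x u y - d k).
    move=> _ [y' hy' <-].
    have h1 := @prj_lip x u y y' hu.
    have h2 : edist y y' <= d k by rewrite -lee_fin -fin; apply: edist_le_ediam.
    lra.
  have ne : [set prj x u y | y in E k] !=set0 by exists (prj x u y), y.
  rewrite /H /= in_itv /=; apply/andP; split.
    by apply: ge_inf; [exists (prj x u y - d k)|exists y].
  by rewrite -lerBlDr; apply: lb_le_inf.
have sub : (`[a1, a2]%classic : set R) `<=` `[j1, j2]%classic `|` \bigcup_i H i.
  move=> t /=; rewrite in_itv /= => /hcov [hJ|[y hy <-]].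
    by left; rewrite /= in_itv.
  have [k _ hk] := cov y hy; right; exists k => //; exact: memH.
have mH i : measurable (H i) by exact: measurable_itv.
have mU : measurable (\bigcup_i H i) by exact: bigcupT_measurable.
have mJ : measurable (`[j1, j2]%classic : set R) by exact: measurable_itv.
have h1 := le_measure lebesgue_measure (mem_set (measurable_itv `[a1, a2]))
   (mem_set (measurableU _ _ mJ mU)) sub.
have h2 := measureU2 (lebesgue_measure (R:=R)) mJ mU.
have h3 := @measure_sigma_subadditive _ _ _ lebesgue_measure (\bigcup_i H i) H mH mU (@subset_refl _ _).
have h4 : (\sum_(0 <= n <oo) lebesgue_measure (H n) = \sum_(0 <= n <oo) ediam (E n))%E.
  apply: eq_eseriesr => n _; rewrite /H leb_itv; last by rewrite lerDl.
  by rewrite fin addrAC subrr add0r.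
rewrite EFinB leeBlDl // -h4.
rewrite -(leb_itv _ _ ha) -(leb_itv _ _ hj).
apply: le_trans h1 _.
apply: le_trans h2 _.
by apply: leeD.
Qed.

Lemma cont_fst : continuous (fun y : pt R => y.1).
Proof. move=> [a b]; exact: cvg_fst. Qed.
Lemma cont_snd : continuous (fun y : pt R => y.2).
Proof. move=> [a b]; exact: cvg_snd. Qed.

Lemma cont_prj x u : continuous (prj x u).
Proof.
move=> y; rewrite /prj.
apply: (@continuousD _ _ _ (fun y : pt R => (y.1 - x.1) * u.1) (fun y => (y.2 - x.2) * u.2)).
  apply: (@continuousM _ _ (fun y : pt R => (y.1 - x.1)) (fun=> u.1)); last exact: cst_continuous.
  apply: (@continuousB _ _ _ (fun y : pt R => y.1) (fun=> x.1)); [exact: cont_fst|exact: cst_continuous].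
apply: (@continuousM _ _ (fun y : pt R => (y.2 - x.2)) (fun=> u.2)); last exact: cst_continuous.
apply: (@continuousB _ _ _ (fun y : pt R => y.2) (fun=> x.2)); [exact: cont_snd|exact: cst_continuous].
Qed.

Definition dq x y : R := (y.1 - x.1) * (y.1 - x.1) + (y.2 - x.2) * (y.2 - x.2).

Lemma cont_dq x : continuous (dq x).
Proof.
move=> y; rewrite /dq.
have h1 : {for y, continuous (fun y : pt R => y.1 - x.1)}.
  apply: (@continuousB _ _ _ (fun y : pt R => y.1) (fun=> x.1)); [exact: cont_fst|exact: cst_continuous].
have h2 : {for y, continuous (fun y : pt R => y.2 - x.2)}.
  apply: (@continuousB _ _ _ (fun y : pt R => y.2) (fun=> x.2)); [exact: cont_snd|exact: cst_continuous].
apply: (@continuousD _ _ _ (fun y : pt R => (y.1 - x.1) * (y.1 - x.1)) (fun y => (y.2 - x.2) * (y.2 - x.2))).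
  exact: (@continuousM _ _ (fun y : pt R => (y.1 - x.1)) (fun y => y.1 - x.1)).
exact: (@continuousM _ _ (fun y : pt R => (y.2 - x.2)) (fun y => y.2 - x.2)).
Qed.

Lemma edist_dq x y : edist x y ^+ 2 = dq x y.
Proof. by rewrite edist_sq /dq; ring. Qed.

Lemma edist_ltE x y r : 0 < r -> (edist x y < r) <-> (dq x y < r ^+ 2).
Proof.
move=> hr; have h0 := edist_ge0 x y; have e := edist_dq x y.
split => h; first by rewrite -e; nra.
rewrite ltNge; apply/negP => h'; nra.
Qed.

Lemma edist_leE x y r : 0 < r -> (edist x y <= r) <-> (dq x y <= r ^+ 2).
Proof.
move=> hr; have h0 := edist_ge0 x y; have e := edist_dq x y.
split => h; first by rewrite -e; nra.
rewrite leNgt; apply/negP => h'; nra.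
Qed.

Lemma decomp x u y : u.1 ^+ 2 + u.2 ^+ 2 = 1 ->
  dq x y = prj x u y ^+ 2 + nrm x u y ^+ 2.
Proof.
move=> hu; rewrite /dq /prj /nrm.
set a := y.1 - x.1; set c := y.2 - x.2.
have -> : a * a + c * c = (a * a + c * c) * (u.1 ^+ 2 + u.2 ^+ 2) by rewrite hu mulr1.
ring.
Qed.

Lemma decomp2 x u s z : u.1 ^+ 2 + u.2 ^+ 2 = 1 ->
  edist (x.1 + s * u.1, x.2 + s * u.2) z ^+ 2 = (prj x u z - s) ^+ 2 + nrm x u z ^+ 2.
Proof.
move=> hu; rewrite edist_sq /prj /nrm /=.
set a := z.1 - x.1; set c := z.2 - x.2.
apply/eqP; rewrite -subr_eq0; apply/eqP.
have -> : (x.1 + s * u.1 - z.1) ^+ 2 + (x.2 + s * u.2 - z.2) ^+ 2 -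
  ((a * u.1 + c * u.2 - s) ^+ 2 + (c * u.1 - a * u.2) ^+ 2) =
  (a ^+ 2 + c ^+ 2 - s ^+ 2) * (1 - (u.1 ^+ 2 + u.2 ^+ 2)) by rewrite /a /c; ring.
by rewrite hu subrr mulr0.
Qed.

Lemma sq_le (p c : R) : - c <= p -> p <= c -> p ^+ 2 <= c ^+ 2.
Proof.
move=> h1 h2.
have h : 0 <= (c - p) * (c + p) by apply: mulr_ge0; lra.
nra.
Qed.

Record hyps (K : set (pt R)) (x u : pt R) (r b : R) : Prop := Hyps {
  hu : u.1 ^+ 2 + u.2 ^+ 2 = 1;
  hx : K x;
  hK : connected K;
  hr : 0 < r;
  hb : 0 < b;
  hbr : 5 * b <= 4 * r;
  Ha : forall y, K y -> edist x y <= r -> nrm x u y ^+ 2 < b ^+ 2;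
  Hb : forall s, `|s| <= r ->
    exists2 z, K z & edist (x.1 + s * u.1, x.2 + s * u.2) z < b }.

Definition gap (K : set (pt R)) x u r t :=
  ~ exists2 y, K y & edist x y < r /\ prj x u y = t.

Lemma sep (K : set (pt R)) (x u : pt R) (r b : R) (H : hyps K x u r b) (t1 t2 : R) : -(r - b / 2) <= t1 -> t2 <= r - b / 2 -> gap K x u r t1 -> gap K x u r t2 ->
  forall z, K z -> t1 < prj x u z < t2 -> edist x z < r ->
  forall y, K y -> t1 < prj x u y < t2 /\ edist x y < r.
Proof.
case: (H) => hu hx hK hr hb hbr Ha Hb.
move=> h1 h2 g1 g2 z Kz /andP[z1 z2] zr.
pose C := [set y | t1 < prj x u y] `&` [set y | prj x u y < t2] `&` [set y | dq x y < r ^+ 2].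
pose C' := [set y | t1 <= prj x u y] `&` [set y | prj x u y <= t2] `&` [set y | dq x y <= r ^+ 2].
have oC : open C.
  apply: openI; first apply: openI.
  - exact: (open_comp (fun y _ => cont_prj x u y) (@open_gt _ t1)).
  - exact: (open_comp (fun y _ => cont_prj x u y) (@open_lt _ t2)).
  - exact: (open_comp (fun y _ => cont_dq x y) (@open_lt _ (r ^+ 2))).
have cC : closed C'.
  apply: closedI; first apply: closedI.
  - exact: (preimage_closed (fun y _ => cont_prj x u y) (@closed_ge _ t1)).
  - exact: (preimage_closed (fun y _ => cont_prj x u y) (@closed_le _ t2)).
  - exact: (preimage_closed (fun y _ => cont_dq x y) (@closed_le _ (r ^+ 2))).
have eq : K `&` C = K `&` C'.
  apply/seteqP; split => y [Ky].
    by move=> [[/ltW ? /ltW ?] /ltW ?].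
  move=> [[p1 p2] d]; rewrite /= in p1 p2 d.
  have hd : dq x y < r ^+ 2.
    rewrite ltNge; apply/negP => d'.
    have := Ha y Ky; rewrite (edist_leE _ _ _ hr) => /(_ d) hn.
    have e := decomp x u y hu.
    have hp1 : - (r - b / 2) <= prj x u y by apply: le_trans p1.
    have hp2 : prj x u y <= r - b / 2 by apply: le_trans h2.
    have hp : prj x u y ^+ 2 <= (r - b / 2) ^+ 2 by apply: sq_le.
    have hc : (r - b / 2) ^+ 2 + b ^+ 2 <= r ^+ 2.
      have h5 : 0 <= 4 * r - 5 * b by rewrite subr_ge0.
      have : 0 <= b * (4 * r - 5 * b) by apply: mulr_ge0 => //; exact: ltW.
      have -> : r ^+ 2 = (r - b / 2) ^+ 2 + b ^+ 2 + b * (4 * r - 5 * b) / 4.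
        by field.
      move=> h; rewrite lerDl; apply: divr_ge0 => //.
    nra.
  have hy : edist x y < r by rewrite (edist_ltE _ _ _ hr).
  split => //; split; [split|] => /=; last by [].
    rewrite lt_neqAle p1 andbT; apply/negP => /eqP e.
    by apply: g1; exists y => //; split.
  rewrite lt_neqAle p2 andbT; apply/negP => /eqP e.
  by apply: g2; exists y => //; split.
have ne : (K `&` C) !=set0.
  exists z; split => //; split; [split|] => //=.
  by rewrite -(edist_ltE _ _ _ hr).
have HB := hK (K `&` C) ne (ex_intro2 _ _ C oC erefl) (ex_intro2 _ _ C' cC eq).
move=> y Ky; have : (K `&` C) y by rewrite HB.
move=> [_ [[/= q1 q2] q3]]; split; first by rewrite q1 q2.
by rewrite (edist_ltE _ _ _ hr).
Qed.

Lemma gap0 (K : set (pt R)) (x u : pt R) (r b : R) (H : hyps K x u r b) : ~ gap K x u r 0.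
Proof.
case: (H) => hu hx hK hr hb hbr Ha Hb.
apply; exists x => //; split; last by rewrite /prj !subrr !mul0r addr0.
by rewrite (edist_ltE _ _ _ hr) /dq !subrr !mul0r addr0 exprn_gt0.
Qed.

Lemma ngap (K : set (pt R)) (x u : pt R) (r b : R) (H : hyps K x u r b) t : ~ gap K x u r t -> exists2 y, (K `&` eball x r) y & prj x u y = t.
Proof.
case: (H) => hu hx hK hr hb hbr Ha Hb.
move=> h; case: (pselect (exists2 y, K y & edist x y < r /\ prj x u y = t)).
  by move=> [y Ky [hy <-]]; exists y.
by move=> n; exfalso; exact: h n.
Qed.

Lemma near_in (K : set (pt R)) (x u : pt R) (r b : R) (H : hyps K x u r b) s : 0 <= s -> s <= r - b ->
  exists2 z, K z & edist x z < r /\ s - b < prj x u z < s + b.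
Proof.
case: (H) => hu hx hK hr hb hbr Ha Hb.
move=> s0 sr.
have [z Kz hz] : exists2 z, K z & edist (x.1 + s * u.1, x.2 + s * u.2) z < b.
  apply: Hb; rewrite ger0_norm //; lra.
have e := decomp2 x u s z hu.
have h0 := edist_ge0 (x.1 + s * u.1, x.2 + s * u.2) z.
have hq : (prj x u z - s) ^+ 2 + nrm x u z ^+ 2 < b ^+ 2 by rewrite -e; nra.
have hn : 0 <= nrm x u z ^+ 2 by apply: sqr_ge0.
have hq1 : -b < prj x u z - s < b.
  apply/andP; split; rewrite ltNge; apply/negP => h; nra.
exists z => //; split; last by apply/andP; split; lra.
rewrite (edist_ltE _ _ _ hr) (decomp x u z hu).
have h1 : 0 <= s * (b - (prj x u z - s)) by apply: mulr_ge0; lra.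
have h2 : (s + b) ^+ 2 <= r ^+ 2 by apply: sq_le; lra.
nra.
Qed.

Lemma far_pt (K : set (pt R)) (x u : pt R) (r b : R) (H : hyps K x u r b) : exists2 z, K z & r - b < prj x u z.
Proof.
case: (H) => hu hx hK hr hb hbr Ha Hb.
have hr' : `|r| <= r by rewrite ger0_norm // ltW.
have [z Kz hz] := Hb r hr'.
exists z => //.
have e := decomp2 x u r z hu.
have h0 := edist_ge0 (x.1 + r * u.1, x.2 + r * u.2) z.
have hn : 0 <= nrm x u z ^+ 2 by apply: sqr_ge0.
have hq : (prj x u z - r) ^+ 2 < b ^+ 2 by nra.
rewrite ltNge; apply/negP => h; nra.
Qed.

Lemma noGapOpp (K : set (pt R)) (x u : pt R) (r b : R) (H : hyps K x u r b) (t1 : R) : -(r - b / 2) <= t1 -> t1 < 0 -> gap K x u r t1 ->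
  forall s, 0 < s -> s <= r - b -> ~ gap K x u r s.
Proof.
case: (H) => hu hx hK hr hb hbr Ha Hb.
move=> h1 h1' g1 s s0 sr gs.
have xr : edist x x < r.
  by rewrite (edist_ltE _ _ _ hr) /dq !subrr !mul0r addr0 exprn_gt0.
have px : prj x u x = 0 by rewrite /prj !subrr !mul0r addr0.
have hs2 : s <= r - b / 2 by lra.
have hxs : t1 < prj x u x < s by rewrite px; apply/andP.
have HH := sep K x u r b H t1 s h1 hs2 g1 gs x hx hxs xr.
have [z Kz hz] := far_pt K x u r b H.
have [/andP[_ hz'] _] := HH z Kz.
lra.
Qed.


Arguments sep {K x u r b} H {t1 t2}.
Arguments gap0 {K x u r b} H.
Arguments ngap {K x u r b} H {t}.
Arguments near_in {K x u r b} H {s}.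
Arguments far_pt {K x u r b} H.
Arguments noGapOpp {K x u r b} H {t1}.

Lemma Geo1 (K : set (pt R)) (x u : pt R) (r b : R) (H : hyps K x u r b) :
  ~ (exists t, -(r - b / 2) <= t < 0 /\ gap K x u r t) ->
  (((2 * r - 3 * b)%:E <= H1 (K `&` eball x r)))%E.
Proof.
move=> Hn; have H' := H; case: H' => hu hx hK hr hb hbr Ha Hb.
have g0 := gap0 H.
have nl t : -(r - b / 2) <= t -> t < 0 -> ~ gap K x u r t.
  by move=> h1 h2 g; apply: Hn; exists t; split => //; apply/andP.
case: (pselect (exists g, 0 < g <= r - b / 2 /\ gap K x u r g)) => [[g0' [hg0 gg0]]|Hno].
  pose G := [set g | 0 < g <= r - b / 2 /\ gap K x u r g].
  pose al := inf G.
  have Gne : G !=set0 by exists g0'.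
  have Glb : has_lbound G by exists 0 => y [/andP[/ltW ? _] _].
  have Gin t : -(r - b / 2) <= t <= r - b / 2 -> gap K x u r t -> al <= t <= al + 2 * b.
    move=> /andP[t1 t2] gt.
    have tpos : 0 < t.
      rewrite ltNge; apply/negP => t0.
      have [e|tn] := eqVneq t 0; first by apply: g0; rewrite -e.
      by apply: (nl t t1) => //; rewrite lt_neqAle tn.
    have Gt : G t by split => //; apply/andP.
    apply/andP; split; first exact: ge_inf.
    rewrite leNgt; apply/negP => tl.
    have [g [/andP[g1 g2] gg] glt] : exists2 g, G g & g < t - 2 * b.
      by apply: inf_lt => //; lra.
    pose s := (g + t) / 2.
    have s0 : 0 <= s by rewrite /s; lra.
    have s1 : s <= r - b by rewrite /s; lra.
    have [z Kz [zr /andP[z1 z2]]] := near_in H s0 s1.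
    have hz : g < prj x u z < t by apply/andP; split; rewrite /s in z1 z2; lra.
    have hg : -(r - b / 2) <= g by lra.
    have [/andP[hx1 _] _] := sep H hg t2 gg gt z Kz hz zr x hx.
    by move: hx1; rewrite /prj !subrr !mul0r addr0; lra.
  have hc t : -(r - b / 2) <= t <= r - b / 2 -> (al <= t <= al + 2 * b) \/
      exists2 y, (K `&` eball x r) y & prj x u y = t.
    move=> ht; case: (pselect (gap K x u r t)) => g; first by left; exact: Gin.
    right; exact (ngap H g).
  have ha : -(r - b / 2) <= r - b / 2 by lra.
  have hj : al <= al + 2 * b by lra.
  have P := proj_H1 x u (K `&` eball x r) (-(r - b / 2)) (r - b / 2) al (al + 2 * b) hu ha hj hc.
  apply: le_trans P; rewrite lee_fin; lra.
have hc t : -(r - b / 2) <= t <= r - b / 2 -> (0 <= t <= 0) \/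
    exists2 y, (K `&` eball x r) y & prj x u y = t.
  move=> /andP[t1 t2]; right; apply (ngap H); intro g.
  have [e|tn] := eqVneq t 0; first by apply: g0; rewrite -e.
  case: (ltrP t 0) => tl.
    exact: (nl t t1 tl g).
  by apply: Hno; exists t; split => //; apply/andP; split => //; rewrite lt_neqAle eq_sym tn.
have ha : -(r - b / 2) <= r - b / 2 by lra.
have P := proj_H1 x u (K `&` eball x r) (-(r - b / 2)) (r - b / 2) 0 0 hu ha (lexx 0) hc.
apply: le_trans P; rewrite lee_fin; lra.
Qed.


Definition uneg (u : pt R) : pt R := (- u.1, - u.2).

Lemma prj_neg x u y : prj x (uneg u) y = - prj x u y.
Proof. rewrite /prj /uneg /=; ring. Qed.

Lemma nrm_neg x u y : nrm x (uneg u) y = - nrm x u y.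
Proof. rewrite /nrm /uneg /=; ring. Qed.

Lemma hyps_neg K x u r b : hyps K x u r b -> hyps K x (uneg u) r b.
Proof.
case=> hu hx hK hr hb hbr Ha Hb; split => //.
- by rewrite /uneg /= !sqrrN.
- by move=> y Ky hy; rewrite nrm_neg sqrrN; apply: Ha.
- move=> s hs; have hs' : `|- s| <= r by rewrite normrN.
  have [z Kz hz] := Hb (- s) hs'.
  exists z => //; move: hz; rewrite /uneg /= !mulrN !mulNr //.
Qed.

Arguments hyps_neg {K x u r b}.

Lemma gap_neg K x u r t : gap K x u r t -> gap K x (uneg u) r (- t).
Proof.
move=> g [y Ky [hy hp]]; apply: g; exists y => //; split => //.
by move: hp; rewrite prj_neg => /eqP; rewrite eqr_opp => /eqP.
Qed.

Lemma geo_main K x u r b : hyps K x u r b ->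
  (((2 * r - 3 * b)%:E <= H1 (K `&` eball x r)))%E.
Proof.
move=> H; have H' := H; case: H' => hu hx hK hr hb hbr Ha Hb.
case: (pselect (exists t, -(r - b / 2) <= t < 0 /\ gap K x u r t)); last exact: Geo1 H.
move=> [t1 [/andP[a1 a2] g1]].
have Hn := hyps_neg H.
case: (pselect (exists t, -(r - b / 2) <= t < 0 /\ gap K x (uneg u) r t)); last exact: Geo1 Hn.
move=> [t2 [/andP[b1 b2] g2]].
have A := noGapOpp H a1 a2 g1.
have B := noGapOpp Hn b1 b2 g2.
have hc t : -(r - b) <= t <= r - b -> (0 <= t <= 0) \/
    exists2 y, (K `&` eball x r) y & prj x u y = t.
  move=> /andP[c1 c2]; right; apply (ngap H); intro g.
  have [e|tn] := eqVneq t 0; first by apply: (gap0 H); rewrite -e.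
  case: (ltrP t 0) => tl.
    apply: (B (- t)); first lra.
      lra.
    exact: gap_neg.
  by apply: (A t) => //; rewrite lt_neqAle eq_sym tn.
have ha : -(r - b) <= r - b by lra.
have P := proj_H1 x u (K `&` eball x r) (-(r - b)) (r - b) 0 0 hu ha (lexx 0) hc.
apply: le_trans P; rewrite lee_fin; lra.
Qed.

End Geo.

Theorem lemma5p4 (R : realType) (K : set (R * R)) (x : R * R) (r : R) :
  compact K -> connected K -> (H1 K < +oo)%E ->
  K x -> 0 < r -> (r%:E < ediam K)%E ->
  (beta K x r <= (1 / 2)%:E)%E ->
  ((2 * r)%:E - (3 * r)%:E * beta K x r <= H1 (K `&` eball x r))%E.
Proof.
move=> _ hK _ hx hr _.
rewrite /beta; set I := ereal_inf _ => hbeta.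
have I0 : (0 <= I)%E.
  apply: le_ereal_inf_tmp => _ [L [v hv <-] <-].
  rewrite le_max; apply/orP; left.
  apply: le_trans (_ : (0 <= edist_set x (line_through x v))%E) _.
    apply: le_ereal_inf_tmp => _ [z _ <-]; rewrite lee_fin; exact: edist_ge0.
  apply: ereal_sup_ubound; exists x => //; split => //.
  by rewrite /ecball /= (edist_leE _ _ _ _ hr) /dq !subrr !mul0r addr0 exprn_ge0 // ltW.
have [i Ie] : exists i, I = i%:E.
  move: I0 hbeta; case: I => [i _ _|_|//]; first by exists i.
  rewrite mulry gtr0_sg ?invr_gt0 // mul1e leye_eq => /eqP h.
  by exfalso; move: h.
rewrite Ie -EFinM in hbeta *.
rewrite Ie lee_fin in I0.
rewrite lee_fin in hbeta.
have rn0 : r != 0 by rewrite gt_eqF.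
have hi : i <= r / 2.
  have -> : i = r * (r^-1 * i) by field.
  have : r * (r^-1 * i) <= r * (1 / 2) by rewrite ler_pM2l.
  lra.
rewrite -EFinM -EFinB.
have -> : 2 * r - 3 * r * (r^-1 * i) = 2 * r - 3 * i by field.
apply/lee_addgt0Pr => e e0.
pose e' := Num.min (e / 3) (r / 10).
have e'0 : 0 < e' by rewrite lt_min; apply/andP; split; lra.
have e'1 : e' <= e / 3 by rewrite ge_min lexx.
have e'2 : e' <= r / 10 by rewrite ge_min lexx orbT.
pose b := i + e'.
suff Hs : ((2 * r - 3 * b)%:E <= H1 (K `&` eball x r))%E.
  apply: le_trans (_ : _ <= (2 * r - 3 * b)%:E + e%:E)%E _.
    rewrite -EFinD lee_fin /b; lra.
  exact: leeD2r.
have : (I < b%:E)%E by rewrite Ie lte_fin /b; lra.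
move=> /ereal_inf_lt [_ [L [v hv <-] <-]].
rewrite gt_max => /andP[h1 h2].
rewrite /= in hv.
have hb : 0 < b by rewrite /b; lra.
have hbr : 5 * b <= 4 * r by rewrite /b; lra.
have v2pos : 0 < v.1 ^+ 2 + v.2 ^+ 2.
  rewrite lt_neqAle addr_ge0 ?sqr_ge0 // andbT eq_sym paddr_eq0 ?sqr_ge0 //.
  rewrite !sqrf_eq0; apply/negP => /andP[/eqP e1 /eqP e2].
  move: hv; have -> : v = (0, 0) by rewrite [v]surjective_pairing e1 e2.
  by rewrite eqxx.
pose nv := Num.sqrt (v.1 ^+ 2 + v.2 ^+ 2).
have nv0 : 0 < nv by rewrite sqrtr_gt0.
have nvn0 : nv != 0 by rewrite gt_eqF.
have nv2 : nv ^+ 2 = v.1 ^+ 2 + v.2 ^+ 2 by rewrite sqr_sqrtr // ltW.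
pose u : pt R := (v.1 / nv, v.2 / nv).
have hu : u.1 ^+ 2 + u.2 ^+ 2 = 1.
  by rewrite /u /= !expr_div_n -mulrDl -nv2 divff // expf_neq0.
apply: (@geo_main R K x u r b).
split => //.
- move=> y Ky hy.
  have hs : (edist_set y (line_through x v) < b%:E)%E.
    apply: le_lt_trans h1; apply: ereal_sup_ubound; exists y => //.
  move: hs => /ereal_inf_lt [_ [z [t ->] <-]]; rewrite lte_fin => hz.
  have h0 := edist_ge0 _ y (x.1 + t * v.1, x.2 + t * v.2).
  have e2 := edist_sq _ y (x.1 + t * v.1, x.2 + t * v.2).
  rewrite /= in e2.
  set a := y.1 - (x.1 + t * v.1) in e2.
  set c := y.2 - (x.2 + t * v.2) in e2.
  have en : nrm _ x u y = c * u.1 - a * u.2 by rewrite /nrm /u /a /c /=; ring.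
  have cs : (c * u.1 - a * u.2) ^+ 2 <= a ^+ 2 + c ^+ 2.
    have : 0 <= (a * u.1 + c * u.2) ^+ 2 by apply: sqr_ge0.
    have -> : a ^+ 2 + c ^+ 2 = (a ^+ 2 + c ^+ 2) * (u.1 ^+ 2 + u.2 ^+ 2) by rewrite hu mulr1.
    move=> hh; nra.
  rewrite en; nra.
- move=> s hs.
  pose p : pt R := (x.1 + s * u.1, x.2 + s * u.2).
  have Lp : line_through x v p.
    by exists (s / nv); rewrite /p /u /=; congr pair; ring.
  have sr : s ^+ 2 <= r ^+ 2 by apply: sq_le; move: hs; rewrite ler_norml => /andP[].
  have cp : ecball x r p.
    rewrite /ecball /= (edist_leE _ _ _ _ hr) /dq /p /=.
    have -> : (x.1 + s * u.1 - x.1) * (x.1 + s * u.1 - x.1) +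
      (x.2 + s * u.2 - x.2) * (x.2 + s * u.2 - x.2) = s ^+ 2 * (u.1 ^+ 2 + u.2 ^+ 2) by ring.
    by rewrite hu mulr1.
  have hs2 : (edist_set p K < b%:E)%E.
    apply: le_lt_trans h2; apply: ereal_sup_ubound; exists p => //.
  move: hs2 => /ereal_inf_lt [_ [z Kz <-]]; rewrite lte_fin => hz.
  by exists z.
Qed.
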